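(* Let $T$ be a p-string of length $n$ and let $1<i\le n$. Let $v_{i-1}$ be the node of $\mathrm{PPH}(T[i-1..])$ with id $i-1$ (the node inserted when passing from $\mathrm{PPH}(T[i..])$ to $\mathrm{PPH}(T[i-1..])$). Then in $\mathrm{PPH}(T[i-1..])$ there is no symbol $a\in\Sigma\cup\{0,\ldots,n-1\}$ for which $\mathrm{rslink}(a,v_{i-1})$ is defined.
   Context: Let $\Sigma$ and $\Pi$ be disjoint alphabets. A p-string is a finite string over $\Sigma\cup\Pi$. For a string $S$, $S[i]$ is its $i$-th character, $S[i..j]$ is the substring from position $i$ to $j$ (empty if $j<i$), and $S[i..]=S[i..|S|]$. The previous encoding $\mathrm{prev}(S)$ of a p-string $S$ of length $n$ is the sequence of length $n$ defined by: - $\mathrm{prev}(S)[i]=S[i]$ if $S[i]\in\Sigma$; - $\mathrm{prev}(S)[i]=0$ if $S[i]\in\Pi$ does not occur in $S[1..i-1]$; - $\mathrm{prev}(S)[i]=i-j$ otherwise, where $j<i$ is the largest position with $S[j]=S[i]$. Sequence hash tree. Let $\langle S_1,\ldots,S_k\rangle$ be a sequence of strings with $S_1=\varepsilon$ and with $S_i$ not a prefix of $S_j$ for any $j<i$. Its sequence hash tree is built as follows. Start from a root representing $\varepsilon$. For $i=2,\ldots,k$, insert as a new node the shortest prefix $p_i$ of $S_i$ that is not yet a node. Attach it as a child of the longest prefix $q_i$ of $S_i$ that is already a node, via an edge labeled $S_i[|q_i|+1]$. $\mathrm{PPH}(T[i..])$ is the sequence hash tree of $\langle\varepsilon,\mathrm{prev}(T[n..]),\ldots,\mathrm{prev}(T[i..])\rangle$.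 Nodes are identified with their root-to-node path labels, and $|v|$ is the length. The node with id $j$ is the node inserted for $\mathrm{prev}(T[j..])$. Reversed suffix links in a heap with nodes over $\Sigma\cup\{0,\ldots,n-1\}$ are defined as follows: - if $a\in\Sigma\cup\{0\}$ and $av$ is a node, then $\mathrm{rslink}(a,v)=av$; - if $a\in\{1,\ldots,n-1\}$, $v[a]=0$, and $0\,v[1..a-1]\,a\,v[a+1..|v|]$ is a node, then $\mathrm{rslink}(a,v)$ is that node; - otherwise $\mathrm{rslink}(a,v)$ is undefined. *)

(* Defs.v *)
From mathcomp Require Import all_boot.
Set Implicit Arguments. Unset Strict Implicit. Unset Printing Implicit Defensive.

Section PString.
Variables (Sigma Pi : eqType).

Definition pchar := (Sigma + Pi)%type.
Definition psym := (Sigma + nat)%type.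

Definition prev_char (pre : seq pchar) (c : pchar) : psym :=
  match c with
  | inl a => inl a
  | inr p => if inr p \in pre then inr (index (inr p) (rev pre)).+1 else inr 0
  end.

Fixpoint prev_aux (pre : seq pchar) (s : seq pchar) : seq psym :=
  match s with
  | [::] => [::]
  | c :: s' => prev_char pre c :: prev_aux (rcons pre c) s'
  end.

Definition prev (S : seq pchar) : seq psym := prev_aux [::] S.

(* T[i..] for 1-indexed i *)
Definition suffix (T : seq pchar) (i : nat) : seq pchar := drop i.-1 T.

(* Sequence hash tree, represented by its list of nodes (path labels) in
   insertion order; the root eps comes first.  The parent of a non-root node
   is the node obtained by deleting its last symbol, and the edge label is
   that last symbol, so the node list determines the tree. *)

(* shortest prefix of s that is not yet a node *)
Definition new_node (nodes : seq (seq psym)) (s : seq psym) : seq psym :=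
  take (find (fun k => take k s \notin nodes) (iota 0 (size s).+1)) s.

Definition sht_insert (nodes : seq (seq psym)) (s : seq psym) :=
  rcons nodes (new_node nodes s).

(* PPH(T[i..]) = sequence hash tree of <eps, prev(T[n..]), ..., prev(T[i..])> *)
Definition pph (T : seq pchar) (i : nat) : seq (seq psym) :=
  foldl sht_insert [:: [::]]
    [seq prev (suffix T j) | j <- rev (iota i (size T - i).+1)].

(* node with id j: inserted for prev(T[j..]) into PPH(T[j+1..]) *)
Definition node_id (T : seq pchar) (j : nat) : seq psym :=
  new_node (pph T j.+1) (prev (suffix T j)).

Definition rslink (nodes : seq (seq psym)) (n : nat) (a : psym) (v : seq psym)
  : option (seq psym) :=
  match a with
  | inl c => if (inl c :: v) \in nodes then Some (inl c :: v) else None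
  | inr 0 => if (inr 0 :: v) \in nodes then Some (inr 0 :: v) else None
  | inr k =>
      let w := inr 0 :: set_nth (inr 0) v k.-1 (inr k) in
      if [&& k < n, k <= size v, nth (inr 0) v k.-1 == inr 0 & w \in nodes]
      then Some w else None
  end.

End PString.

(* Main.v *)
Require Import Defs.
From mathcomp Require Import all_boot.
From mathcomp Require Import zify.
Set Implicit Arguments. Unset Strict Implicit. Unset Printing Implicit Defensive.

Section Aux.
Variables (Sigma Pi : eqType).
Local Notation ps := (psym Sigma).
Local Notation pc := (pchar Sigma Pi).

Fixpoint fixf (u : seq ps) (k : nat) : seq ps :=
  match u with
  | [::] => [::]
  | x :: u' => if x == inr k then inr 0 :: u' else x :: fixf u' k.+1
  end.

Definition ff (w : seq ps) : seq ps :=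
  match w with
  | [::] => [::]
  | inr 0 :: u => fixf u 1
  | _ :: u => u
  end.

Lemma fixf_take m u k : fixf (take m u) k = take m (fixf u k).
Proof.
elim: u m k => [|x u IH] [|m] k /=; rewrite ?take0 //; case: ifP => _ //=.
by rewrite IH.
Qed.

Lemma ff_take m w : ff (take m.+1 w) = take m (ff w).
Proof. case: w => [|x w] //=; case: x => [a|[|k]] //=; exact: fixf_take. Qed.

Lemma PC (c : pc) pre d : d != c -> prev_char (c :: pre) d = prev_char pre d.
Proof.
case: d => [a|p] //= H.
rewrite in_cons rev_cons -cats1 index_cat mem_rev (negbTE H) /=.
by case: (inr p \in pre).
Qed.

Lemma M (s : seq pc) : forall pre c,
  (c \in pre) || (if c is inl _ then true else false) ->
  prev_aux (c :: pre) s = prev_aux pre s.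
Proof.
elim: s => [|d s IH] pre c H //=.
rewrite IH; last first.
  case/orP: H => H; apply/orP; [left; by rewrite mem_rcons in_cons H orbT| by right].
congr (_ :: _).
case: (eqVneq d c) => [->|ne]; last exact: PC.
case: c H => [a|p] H //=.
rewrite orbF in H.
by rewrite in_cons eqxx /= rev_cons -cats1 index_cat !mem_rev H.
Qed.

Lemma L (s : seq pc) : forall pre p, inr p \notin pre ->
  fixf (prev_aux (inr p :: pre) s) (size pre).+1 = prev_aux pre s.
Proof.
elim: s => [|d s IH] pre p H //=.
case: (eqVneq d (inr p)) => [->|ne].
  have -> : prev_char (inr p :: pre) (inr p) = inr (size pre).+1.
    by rewrite /= in_cons eqxx /= rev_cons -cats1 index_cat mem_rev (negbTE H) /= eqxx size_rev addn0.
  have -> : prev_char pre (inr p) = inr 0 by rewrite /= (negbTE H).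
  rewrite eqxx.
  congr (_ :: _). apply: M. by rewrite mem_rcons in_cons eqxx.
rewrite PC //.
have -> : (prev_char pre d == inr (size pre).+1) = false.
  case: d ne => [a|q] //= ne.
  case: ifP => h //. apply/negbTE; apply/eqP => -[E].
  move: h; by rewrite -mem_rev -index_mem size_rev E ltnn.
congr (_ :: _).
have -> : (size pre).+2 = (size (rcons pre d)).+1 by rewrite size_rcons.
apply: IH. by rewrite mem_rcons in_cons negb_or eq_sym ne.
Qed.

Lemma PV (s : seq pc) : forall pre p,
  nth (inr 0) (prev_aux pre s) p != inr (size pre + p).+1.
Proof.
elim: s => [|d s IH] pre p /=; first by rewrite nth_nil.
case: p => [|p] /=.
  case: d => [a|q] //=; case: ifP => h //. rewrite addn0.
  apply/negP => /eqP -[E].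
  move: h; by rewrite -mem_rev -index_mem size_rev E ltnn.
have := IH (rcons pre d) p. by rewrite size_rcons addSnnS.
Qed.

Lemma fixf_valid (v : seq ps) : forall k,
  (forall p, nth (inr 0) v p != inr (k + p)) -> fixf v k = v.
Proof.
elim: v => [|x v IH] k H //=.
have := H 0; rewrite addn0 => /negbTE ->. congr (_ :: _).
apply: IH => p. have := H p.+1. by rewrite /= -addSnnS.
Qed.

Lemma fixf_set (v : seq ps) : forall k' k,
  (forall p, nth (inr 0) v p != inr (k + p)) -> k' < size v ->
  fixf (set_nth (inr 0) v k' (inr (k + k'))) k = set_nth (inr 0) v k' (inr 0).
Proof.
elim: v => [|x v IH] [|k'] k H //= Hk.
  by rewrite addn0 eqxx.
have := H 0; rewrite addn0 => /negbTE ->. congr (_ :: _).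
rewrite -addSnnS; apply: IH => // p. have := H p.+1. by rewrite /= -addSnnS.
Qed.

Lemma set_nth_id (v : seq ps) : forall k, k < size v ->
  set_nth (inr 0) v k (nth (inr 0) v k) = v.
Proof. elim: v => [|x v IH] [|k] //= Hk. by rewrite IH. Qed.

Lemma size_prev_aux (s : seq pc) : forall pre, size (prev_aux pre s) = size s.
Proof. elim: s => [|d s IH] pre //=. by rewrite IH. Qed.

Lemma ff_prev (c : pc) s : ff (Defs.prev (c :: s)) = Defs.prev s.
Proof.
rewrite /Defs.prev /=. case: c => [a|p] /=.
  apply: M. by [].
rewrite ?in_nil /=.
have := @L s [::] p; rewrite in_nil; by apply.
Qed.

Lemma ff_prevb (s : seq pc) : ff (Defs.prev s) = Defs.prev (behead s).
Proof. case: s => [|c s] //. exact: ff_prev. Qed.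

Lemma nn_facts (nodes : seq (seq ps)) s : [::] \in nodes -> s \notin nodes ->
  exists K, [/\ new_node nodes s = take K s, 0 < K, K <= size s,
    new_node nodes s \notin nodes & forall k, k < K -> take k s \in nodes].
Proof.
move=> H0 Hs.
set a := (fun k => take k s \notin nodes).
have hasa : has a (iota 0 (size s).+1).
  apply/hasP; exists (size s); first by rewrite mem_iota /= add0n ltnS leqnn.
  by rewrite /a take_size.
have := hasa; rewrite has_find size_iota ltnS => HK.
have Ha := nth_find 0 hasa.
rewrite nth_iota ?ltnS // add0n in Ha.
have Hb : forall k, k < find a (iota 0 (size s).+1) -> take k s \in nodes.
  move=> k Hk. have := before_find 0 Hk.
  rewrite nth_iota; last by rewrite ltnS (leq_trans (ltnW Hk)).
  by rewrite add0n /a => /negbFE.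
exists (find a (iota 0 (size s).+1)); split => //.
  case E: (find _ _) Ha => [|K] //. by rewrite /a take0 H0.
Qed.

End Aux.

Section Main.
Variables (Sigma Pi : eqType).
Variable T : seq (pchar Sigma Pi).
Local Notation n := (size T).
Local Notation P j := (Defs.prev (Defs.suffix T j)).
Local Notation N j := (pph T j).

Lemma ffP j : 0 < j -> ff (P j) = P j.+1.
Proof.
move=> Hj. rewrite /Defs.suffix ff_prevb /=.
by rewrite -drop1 drop_drop add1n prednK.
Qed.

Lemma sizeP j : size (P j) = n - j.-1.
Proof. by rewrite /Defs.prev size_prev_aux size_drop. Qed.

Lemma pph_big j : n < j -> N j = [:: [::]; [::]].
Proof.
move=> Hj. rewrite /pph.
have -> : size T - j = 0 by lia.
rewrite /= /Defs.suffix drop_oversize //; last by lia.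
Qed.

Lemma nn_congr (s : seq (psym Sigma)) :
  new_node [:: [::]; [::]] s = new_node [:: [::]] s.
Proof. rewrite /new_node; congr take; apply: eq_find => k. by rewrite !inE orbb. Qed.

Lemma pph_step j : 0 < j <= n -> forall u,
  (u \in N j) = (u \in N j.+1) || (u == node_id T j).
Proof.
move=> /andP [Hj Hjn] u.
case: (ltnP j n) => Hlt.
  have -> : N j = rcons (N j.+1) (node_id T j).
    rewrite /pph.
    have -> : size T - j = (size T - j.+1).+1 by lia.
    by rewrite /= rev_cons map_rcons foldl_rcons.
  by rewrite mem_rcons in_cons orbC.
have Ej : j = n by apply/eqP; rewrite eqn_leq Hjn.
rewrite /node_id (pph_big (j:=j.+1)) ?Ej // nn_congr /pph.
rewrite subnn /=.
by rewrite !inE orbb.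
Qed.

Definition Inv j := [/\ [::] \in N j,
  (forall u m, u \in N j -> take m u \in N j),
  (forall u, u \in N j -> size u <= n - j.-1) &
  (forall u, u \in N j -> ff u \in N j)].

Lemma inv_big j : n < j -> Inv j.
Proof.
move=> Hj; rewrite /Inv pph_big //; split.
- by rewrite inE.
- by move=> u m; rewrite !inE orbb => /eqP ->.
- by move=> u; rewrite !inE orbb => /eqP ->.
- by move=> u; rewrite !inE orbb => /eqP ->.
Qed.

Lemma new_facts j : 0 < j <= n -> Inv j.+1 ->
  exists K, [/\ node_id T j = take K (P j), 0 < K, K <= size (P j),
    node_id T j \notin N j.+1 & forall k, k < K -> take k (P j) \in N j.+1].
Proof.
move=> /andP [H1 H2] [D _ S _].
apply: nn_facts => //.
apply/negP => /S. rewrite sizeP /=. lia.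
Qed.

Lemma inv_step j : 0 < j <= n -> Inv j.+1 -> Inv j.+2 -> Inv j.
Proof.
move=> Hj I1 I2.
have [K [Ev HK0 HKs Hnew Hpre]] := new_facts Hj I1.
have mem := pph_step Hj.
case: I1 => D1 A1 S1 C1.
have sizev : size (node_id T j) = K by rewrite Ev size_takel.
split.
- by rewrite mem D1.
- move=> u m; rewrite !mem => /orP [Hu | /eqP ->].
    by rewrite A1.
  case: (leqP K m) => Hm.
    by rewrite take_oversize ?eqxx ?orbT // sizev.
  by rewrite Ev take_takel ?(ltnW Hm) // Hpre.
- move=> u; rewrite mem => /orP [Hu | /eqP ->].
    have := S1 _ Hu. move: Hj => /andP [? ?] /=. lia.
  by rewrite sizev -sizeP.
- move=> u; rewrite !mem => /orP [Hu | /eqP ->].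
    by rewrite C1.
  apply/orP; left.
  rewrite Ev -(prednK HK0) ff_take ffP; last by case/andP: Hj.
  case: (ltnP j n) => Hjn; last first.
    rewrite /Defs.suffix /= drop_oversize; last by lia.
    by rewrite /Defs.prev /=.
  have Hj1 : 0 < j.+1 <= n by rewrite Hjn.
  have [K' [Ev' HK0' HKs' Hnew' Hpre']] := new_facts Hj1 I2.
  have mem1 := pph_step Hj1.
  have v'in : node_id T j.+1 \in N j.+1 by rewrite mem1 eqxx orbT.
  case: (leqP K.-1 K') => HKK.
    by rewrite -(take_takel _ HKK) -Ev' A1.
  exfalso.
  have Hu : take K.-1 (P j) \in N j.+1 by apply: Hpre; rewrite prednK // leqnn.
  rewrite mem1 in Hu.
  case/orP: Hu => Hu; last first.
    move/eqP: Hu => /(congr1 size).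
    rewrite size_takel; last by rewrite (leq_trans (leq_pred K)).
    have : size (node_id T j.+1) = K' by rewrite Ev' size_takel.
    move=> ->. lia.
  case: I2 => D2 A2 S2 C2.
  have := C2 _ Hu.
  have EK : K.-1 = K.-2.+1 by lia.
  rewrite EK ff_take ffP; last by case/andP: Hj.
  move/(A2 _ K'). rewrite take_takel; last by lia.
  rewrite -Ev'. by rewrite (negbTE Hnew').
Qed.

Lemma inv_all d : forall j, 0 < j -> n - j.-1 <= d -> Inv j.
Proof.
elim: d => [|d IH] j Hj Hd.
  apply: inv_big. lia.
case: (ltnP n j) => Hn; first exact: inv_big.
apply: inv_step.
- by rewrite Hj Hn.
- apply: IH => //=. lia.
- apply: IH => //=. lia.
Qed.

End Main.

Theorem lemma6 (Sigma Pi : eqType) (T : seq (pchar Sigma Pi)) (i : nat) :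
  1 < i <= size T ->
  forall a : psym Sigma,
    (match a with inl _ => True | inr k => k < size T end) ->
    rslink (pph T i.-1) (size T) a (node_id T i.-1) = None.
Proof.
move=> /andP [Hi Hin] a _.
set j := i.-1.
have Hj : 0 < j <= size T by rewrite /j; apply/andP; split; lia.
have Ei : j.+1 = i by rewrite /j prednK //; lia.
have I1 : Inv T j.+1 by apply: (inv_all (d := size T)); lia.
have I2 : Inv T j.+2 by apply: (inv_all (d := size T)); lia.
have [K [Ev HK0 HKs Hnew Hpre]] := new_facts Hj I1.
set v := node_id T j in Ev Hnew *.
have sizev : size v = K by rewrite Ev size_takel.
have valid : forall p, nth (inr 0) v p != inr (1 + p).
  move=> p. rewrite add1n Ev.
  case: (ltnP p K) => Hp.
    rewrite nth_take //. have := PV (Defs.suffix T j) [::] p. by rewrite add0n.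
  by rewrite nth_default // size_takel.
have key : forall w, w \in pph T j -> size w = (size v).+1 -> ff w = v -> False.
  move=> w Hw Hs Hf.
  rewrite (pph_step Hj) in Hw.
  case/orP: Hw => Hw; last first.
    move/eqP: Hw Hs => -> Hs. exact: (n_Sn _ Hs).
  case: I1 => _ _ _ C1.
  have := C1 _ Hw. rewrite Hf. by rewrite (negbTE Hnew).
case: a => [c|[|k]] /=.
- case: ifP => // H; exfalso. exact: (key _ H).
- case: ifP => // H; exfalso. apply: (key _ H) => //=. exact: fixf_valid.
- case: ifP => // /and4P [_ Hk Hn Hw]; exfalso.
  apply: (key _ Hw).
    by rewrite /= size_set_nth; apply/eqP; rewrite eqSS; apply/eqP/maxn_idPr.
  rewrite /= -add1n fixf_set //.
  have := set_nth_id Hk. by rewrite (eqP Hn).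
Qed.
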